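(* Let $G$, $\mathrm{b}$, $(w_{ij})$, $M^*$ and $(y^*,\lambda^* )$ be as in the context, and assume the LP relaxation (Primal LP) has no fractional solution. Then for any alternating path $P$ (with respect to $M^*$) in $G$ of length at least $2n$, there exists an edge $\{i,j\}\in P$ such that $|w_{ij}-y_i^*-y_j^*|>0$.
   Context: Let $G=(V,E)$ be a finite undirected simple graph, $V=\{1,\dots,n\}$, with real edge weights $w_{ij}$ and positive integers $b_i\le\deg_G(i)$; $N(i)$ is the neighbour set of $i$. A perfect $\mathrm{b}$-matching is a set of edges in which each vertex $i$ has degree exactly $b_i$; assume one exists. Primal LP: minimize $\sum_{\{i,j\}\in E}w_{ij}x_{ij}$ s.t. $\sum_{j\in N(i)}x_{ij}=b_i$ for all $i$, $0\le x_{ij}\le1$. Dual LP: maximize $\sum_ib_iy_i-\sum_{\{i,j\}\in E}\lambda_{ij}$ s.t. $w_{ij}+\lambda_{ij}\ge y_i+y_j$, $\lambda_{ij}\ge0$. ''No fractional solution'' means every optimal primal solution lies in $\{0,1\}^E$; then the minimum weight perfect $\mathrm{b}$-matching $M^*$ is unique. $(y^*,\lambda^* )$ is an optimal solution of the Dual LP. A walk $P=(i_1,i_2,\dots,i_k)$ in $G$ (consecutive vertices adjacent, length $k-1$) is an alternating path if (a) either all odd edges $\{i_1,i_2\},\{i_3,i_4\},\dots$ belong to $M^*$ and all even edges $\{i_2,i_3\},\{i_4,i_5\},\dots$ do not, or all odd edges do not belong to $M^*$ and all even edges do; and (b) $P$ may revisit vertices and edges but never repeats an edge immediately: $i_r\neq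 i_{r+1}$ and $i_r\neq i_{r+2}$ for $1\le r\le k-2$. *)

(* Defs.v *)
From mathcomp Require Import all_boot all_order all_algebra.
Set Implicit Arguments. Unset Strict Implicit. Unset Printing Implicit Defensive.
Import Order.TTheory GRing.Theory Num.Theory.
Local Open Scope ring_scope.

(* An edge {i,j} is represented by an ordered pair (i,j) with
   i < j; edge-indexed quantities (w, x, lambda) are functions of two vertices
   that are required to be symmetric (their values off edges are irrelevant). *)

Definition simple_graph n (e : rel 'I_n) : Prop :=
  (forall i, ~~ e i i) /\ (forall i j, e i j = e j i).

Definition sym_fun n (R : Type) (f : 'I_n -> 'I_n -> R) : Prop :=
  forall i j, f i j = f j i.

Definition edge_sum (R : realFieldType) n (e : rel 'I_n) (F : 'I_n -> 'I_n -> R) : R :=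
  \sum_(i < n) \sum_(j < n | e i j && (i < j)%N) F i j.

Definition primal_feasible (R : realFieldType) n (e : rel 'I_n) (b : 'I_n -> nat)
    (x : 'I_n -> 'I_n -> R) : Prop :=
  sym_fun x /\
  (forall i j, e i j -> 0 <= x i j <= 1) /\
  (forall i, \sum_(j < n | e i j) x i j = (b i)%:R).

Definition primal_obj (R : realFieldType) n (e : rel 'I_n) (w x : 'I_n -> 'I_n -> R) : R :=
  edge_sum e (fun i j => w i j * x i j).

Definition primal_optimal (R : realFieldType) n (e : rel 'I_n) (b : 'I_n -> nat)
    (w x : 'I_n -> 'I_n -> R) : Prop :=
  primal_feasible e b x /\
  forall x', primal_feasible e b x' -> primal_obj e w x <= primal_obj e w x'.

Definition no_fractional_solution (R : realFieldType) n (e : rel 'I_n) (b : 'I_n -> nat)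
    (w : 'I_n -> 'I_n -> R) : Prop :=
  forall x, primal_optimal e b w x -> forall i j, e i j -> x i j = 0 \/ x i j = 1.

Definition dual_feasible (R : realFieldType) n (e : rel 'I_n)
    (w : 'I_n -> 'I_n -> R) (y : 'I_n -> R) (lam : 'I_n -> 'I_n -> R) : Prop :=
  sym_fun lam /\
  (forall i j, e i j -> y i + y j <= w i j + lam i j) /\
  (forall i j, e i j -> 0 <= lam i j).

Definition dual_obj (R : realFieldType) n (e : rel 'I_n) (b : 'I_n -> nat)
    (y : 'I_n -> R) (lam : 'I_n -> 'I_n -> R) : R :=
  \sum_(i < n) (b i)%:R * y i - edge_sum e lam.

Definition dual_optimal (R : realFieldType) n (e : rel 'I_n) (b : 'I_n -> nat)
    (w : 'I_n -> 'I_n -> R) (y : 'I_n -> R) (lam : 'I_n -> 'I_n -> R) : Prop :=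
  dual_feasible e w y lam /\
  forall y' lam', dual_feasible e w y' lam' -> dual_obj e b y' lam' <= dual_obj e b y lam.

Definition perfect_bmatching n (e : rel 'I_n) (b : 'I_n -> nat) (M : rel 'I_n) : Prop :=
  (forall i j, M i j = M j i) /\
  (forall i j, M i j -> e i j) /\
  (forall i, #|[set j | M i j]| = b i).

Definition matching_weight (R : realFieldType) n (e : rel 'I_n)
    (w : 'I_n -> 'I_n -> R) (M : rel 'I_n) : R :=
  edge_sum e (fun i j => if M i j then w i j else 0).

Definition min_perfect_bmatching (R : realFieldType) n (e : rel 'I_n) (b : 'I_n -> nat)
    (w : 'I_n -> 'I_n -> R) (M : rel 'I_n) : Prop :=
  perfect_bmatching e b M /\
  forall M', perfect_bmatching e b M' -> matching_weight e w M <= matching_weight e w M'.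

(* A walk (p 0, p 1, ..., p L) of length L is an alternating path w.r.t. M:
   consecutive vertices adjacent; edges alternate in/out of M (edge number r,
   0-based, is in M iff odd r (+) c for a fixed bit c); and no immediate
   repetition: p r <> p (r+1), p r <> p (r+2). *)
Definition alternating_path n (e : rel 'I_n) (M : rel 'I_n) (p : nat -> 'I_n) (L : nat) : Prop :=
  (forall r, (r < L)%N -> e (p r) (p r.+1)) /\
  (exists c : bool, forall r, (r < L)%N -> M (p r) (p r.+1) = (odd r (+) c)) /\
  (forall r, (r < L)%N -> p r != p r.+1) /\
  (forall r, (r.+1 < L)%N -> p r != p r.+2).

(* Main.v *)
Require Import Defs.
From mathcomp Require Import all_boot all_order all_algebra.
From Stdlib Require Import ClassicalEpsilon Classical.
From mathcomp Require Import lra zify.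
Import Order.TTheory GRing.Theory Num.Theory.
Local Open Scope ring_scope.

Definition fracb {R : realFieldType} (v : R) := (0 < v) && (v < 1).

Definition basic {R : realFieldType} {n} (e : rel 'I_n) (x : 'I_n -> 'I_n -> R) :=
  forall d : 'I_n -> 'I_n -> R, sym_fun d ->
    (forall i j, e i j -> ~~ fracb (x i j) -> d i j = 0) ->
    (forall i, \sum_(j < n | e i j) d i j = 0) ->
    forall i j, e i j -> d i j = 0.

Definition nfrac {R : realFieldType} {n} (e : rel 'I_n) (x : 'I_n -> 'I_n -> R) :=
  #|[set ij : 'I_n * 'I_n | e ij.1 ij.2 && fracb (x ij.1 ij.2)]|.

Lemma edge_sum_lin (R : realFieldType) n (e : rel 'I_n) (F G : 'I_n -> 'I_n -> R) (t : R) :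
  edge_sum e (fun i j => F i j + t * G i j) = edge_sum e F + t * edge_sum e G.
Proof.
rewrite /edge_sum mulr_sumr -big_split; apply: eq_bigr => i _ /=.
by rewrite mulr_sumr -big_split.
Qed.

Lemma obj_lin (R : realFieldType) n (e : rel 'I_n) (w x d : 'I_n -> 'I_n -> R) (t : R) :
  primal_obj e w (fun i j => x i j + t * d i j) =
  primal_obj e w x + t * edge_sum e (fun i j => w i j * d i j).
Proof.
rewrite /primal_obj -edge_sum_lin; apply: eq_bigr => i _; apply: eq_bigr => j _.
by rewrite mulrDr mulrCA.
Qed.

Lemma step_dir (R : realFieldType) n (e : rel 'I_n) (b : 'I_n -> nat)
  (w x d : 'I_n -> 'I_n -> R) (i0 j0 : 'I_n) :
  primal_feasible e b x -> sym_fun d ->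
  (forall i j, e i j -> ~~ fracb (x i j) -> d i j = 0) ->
  (forall i, \sum_(j < n | e i j) d i j = 0) ->
  e i0 j0 -> d i0 j0 != 0 ->
  edge_sum e (fun i j => w i j * d i j) <= 0 ->
  exists x', primal_feasible e b x' /\ primal_obj e w x' <= primal_obj e w x /\
    (nfrac e x' < nfrac e x)%N.
Proof.
move=> [xs [xb xsum]] ds dsupp dsum e0 d0 E0.
pose P := fun ij : 'I_n * 'I_n => e ij.1 ij.2 && (d ij.1 ij.2 != 0).
pose st := fun ij : 'I_n * 'I_n =>
  if 0 < d ij.1 ij.2 then (1 - x ij.1 ij.2) / d ij.1 ij.2 else - (x ij.1 ij.2 / d ij.1 ij.2).
have P0 : P (i0, j0) by rewrite /P /= e0 d0.
have fracP : forall i j, e i j -> d i j != 0 -> fracb (x i j).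
  move=> i j eij dn; apply/negPn/negP => h.
  by rewrite (dsupp i j eij h) eqxx in dn.
have stP : forall i j, P (i, j) ->
   0 < st (i, j) /\ ((0 < d i j /\ st (i, j) * d i j = 1 - x i j) \/
                    (d i j < 0 /\ st (i, j) * d i j = - x i j)).
  move=> i j /andP[/= eij dn]; have /andP[x0 x1] := fracP i j eij dn.
  rewrite /st /=; case: ifP => dp.
    have -> : (1 - x i j) / d i j * d i j = 1 - x i j by rewrite mulfVK.
    split; last by left.
    by apply: divr_gt0 => //; rewrite subr_gt0.
  have dneg : d i j < 0 by rewrite lt_neqAle dn /= leNgt dp.
  have q : x i j / d i j * d i j = x i j by rewrite mulfVK.
  split; last by right; split => //; rewrite mulNr q.
  nra.
case: (arg_minP st P0) => [[a1 a2] Pa amin].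
have [tpos tval] := stP a1 a2 Pa.
have amin' : forall i j, P (i, j) -> st (a1, a2) <= st (i, j) by move=> i j /amin.
clear amin; move: (st (a1, a2)) tpos tval amin' => t tpos tval amin.
pose x' := fun i j => x i j + t * d i j.
exists x'; split; [split; [|split]|split].
- by move=> i j; rewrite /x' xs ds.
- move=> i j eij; rewrite /x'.
  case: (eqVneq (d i j) 0) => [->|dn]; first by rewrite mulr0 addr0 xb.
  have Pij : P (i, j) by rewrite /P /= eij dn.
  have tle := amin i j Pij.
  have /andP[x0 x1] := fracP i j eij dn.
  have [_ [[dp sd]|[dn' sd]]] := stP i j Pij; move: (st (i, j)) tle sd => s tle sd;
  apply/andP; split; nra.
- move=> i; rewrite /x' big_split /= -mulr_sumr dsum mulr0 addr0 xsum //.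
- rewrite obj_lin; nra.
set S := [set ij : 'I_n * 'I_n | e ij.1 ij.2 && fracb (x ij.1 ij.2)].
have aS : (a1, a2) \in S.
  by rewrite inE /=; move: Pa => /andP[/= ea da]; rewrite ea fracP.
have xa : ~~ fracb (x' a1 a2).
  rewrite /x' /fracb; move: Pa => /andP[/= ea da].
  have /andP[x0 x1] := fracP a1 a2 ea da.
  by case: tval => [[_ ->]|[_ ->]]; rewrite ?subrKC ?subrr ltxx ?andbF.
have sub : [set ij : 'I_n * 'I_n | e ij.1 ij.2 && fracb (x' ij.1 ij.2)] \subset S :\ (a1, a2).
  apply/subsetP => -[i j]; rewrite !inE /= => /andP[eij fr].
  apply/andP; split.
    apply/negP => /eqP [? ?]; subst; by rewrite fr in xa.
  rewrite eij /=.
  case: (eqVneq (d i j) 0) => [dz|dn]; last exact: fracP.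
  by move: fr; rewrite /x' dz mulr0 addr0.
rewrite /nfrac -/S (cardsD1 (a1, a2) S) aS add1n ltnS.
exact: subset_leq_card sub.
Qed.

Lemma step_lemma (R : realFieldType) n (e : rel 'I_n) (b : 'I_n -> nat)
  (w x : 'I_n -> 'I_n -> R) :
  primal_feasible e b x -> ~ basic e x ->
  exists x', primal_feasible e b x' /\ primal_obj e w x' <= primal_obj e w x /\
    (nfrac e x' < nfrac e x)%N.
Proof.
move=> fx nb.
have [d [ds [dsupp [dsum [i0 [j0 [e0 d0]]]]]]] : exists d : 'I_n -> 'I_n -> R, sym_fun d /\
   (forall i j, e i j -> ~~ fracb (x i j) -> d i j = 0) /\
   (forall i, \sum_(j < n | e i j) d i j = 0) /\ exists i j, e i j /\ d i j != 0.
  apply: NNPP => H; apply: nb => d ds dsupp dsum i j eij; apply: NNPP => dn; apply: H.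
  exists d; do 3 (split => //); exists i, j; split => //; exact/eqP.
case: (lerP (edge_sum e (fun i j => w i j * d i j)) 0) => E.
  exact: (@step_dir R n e b w x d i0 j0 fx ds dsupp dsum e0 d0 E).
apply: (@step_dir R n e b w x (fun i j => - d i j) i0 j0) => //.
- by move=> i j; rewrite ds.
- by move=> i j eij h; rewrite dsupp ?oppr0.
- by move=> i; rewrite sumrN dsum oppr0.
- by rewrite oppr_eq0.
have -> : edge_sum e (fun i j => w i j * - d i j) = - edge_sum e (fun i j => w i j * d i j).
  rewrite /edge_sum -sumrN; apply: eq_bigr => i _; rewrite -sumrN.
  by apply: eq_bigr => j _; rewrite mulrN.
by rewrite oppr_le0 ltW.
Qed.

Lemma reduce (R : realFieldType) n (e : rel 'I_n) (b : 'I_n -> nat)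
  (w : 'I_n -> 'I_n -> R) : forall k (x : 'I_n -> 'I_n -> R), (nfrac e x <= k)%N ->
  primal_feasible e b x -> exists xb, primal_feasible e b xb /\ basic e xb /\
     primal_obj e w xb <= primal_obj e w x.
Proof.
elim=> [|k IH] x hk fx; case: (classic (basic e x)) => bx;
  try by exists x; split; [|split].
- have [x' [_ [_ lt]]] := @step_lemma R n e b w x fx bx.
  by move: (leq_trans lt hk).
- have [x' [fx' [le lt]]] := @step_lemma R n e b w x fx bx.
  have [xb [fxb [bxb le']]] := IH x' (leq_trans (leq_trans lt hk) (leqnn _)) fx'.
  exists xb; split => //; split => //; exact: le_trans le' le.
Qed.

Definition pat {R : realFieldType} {n} (x : 'I_n -> 'I_n -> R) : {ffun 'I_n * 'I_n -> option bool} :=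
  [ffun ij => if x ij.1 ij.2 == 0 then Some false else if x ij.1 ij.2 == 1 then Some true else None].

Lemma basic_unique (R : realFieldType) n (e : rel 'I_n) (b : 'I_n -> nat)
  (x y : 'I_n -> 'I_n -> R) :
  primal_feasible e b x -> primal_feasible e b y -> basic e x -> pat x = pat y ->
  forall i j, e i j -> x i j = y i j.
Proof.
move=> [xs [xb xsum]] [ys [yb ysum]] bx pxy i j eij.
apply/eqP; rewrite -subr_eq0; apply/eqP.
apply: (bx (fun i j => x i j - y i j)) => //.
- by move=> i' j'; rewrite xs ys.
- move=> i' j' e' nf.
  have /andP[x0 x1] := xb _ _ e'.
  have hx : x i' j' = 0 \/ x i' j' = 1.
    move: nf; rewrite /fracb negb_and -!leNgt => /orP[h|h].
      by left; apply/le_anti; rewrite h x0.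
    by right; apply/le_anti; rewrite h x1.
  have := congr1 (fun f : {ffun 'I_n * 'I_n -> option bool} => f (i', j')) pxy; rewrite !ffunE /=.
  case: hx => ->; rewrite ?eqxx ?oner_eq0;
    (case: eqP => [->|_]; [|case: eqP => [->|_]]) => //= _; by rewrite subrr.
- by move=> i'; rewrite sumrB xsum ysum subrr.
Qed.

Lemma obj_edges (R : realFieldType) n (e : rel 'I_n) (w x y : 'I_n -> 'I_n -> R) :
  (forall i j, e i j -> x i j = y i j) -> primal_obj e w x = primal_obj e w y.
Proof.
move=> h; apply: eq_bigr => i _; apply: eq_bigr => j /andP[eij _]; by rewrite h.
Qed.

Lemma lp_opt_exists (R : realFieldType) n (e : rel 'I_n) (b : 'I_n -> nat)
  (w : 'I_n -> 'I_n -> R) :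
  (exists x0 : 'I_n -> 'I_n -> R, primal_feasible e b x0) -> exists x, primal_optimal e b w x.
Proof.
move=> [x0 fx0].
pose Q := fun s (x : 'I_n -> 'I_n -> R) => primal_feasible e b x /\
  ((exists y : 'I_n -> 'I_n -> R, primal_feasible e b y /\ basic e y /\ pat y = s) -> basic e x /\ pat x = s).
have inh : inhabited ('I_n -> 'I_n -> R) by constructor; exact x0.
pose f := fun s => epsilon inh (Q s).
have fQ : forall s, Q s (f s).
  move=> s; apply: epsilon_spec.
  case: (classic (exists y : 'I_n -> 'I_n -> R, primal_feasible e b y /\ basic e y /\ pat y = s)) => [[y [fy [hby py]]]|H].
    by exists y; split.
  by exists x0; split => // h; case: H.
pose F := fun s => primal_obj e w (f s).
case: (@arg_minP _ _ _ (pat x0) predT F isT) => a _ amin.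
exists (f a); split; first by case: (fQ a).
move=> x' fx'.
have [xb [fxb [bxb le]]] := @reduce R n e b w _ x' (leqnn _) fx'.
have [ff /(_ (ex_intro _ xb (conj fxb (conj bxb erefl))))] := fQ (pat xb).
move=> [bf pf].
have h := amin (pat xb) isT.
apply: le_trans h _; rewrite /F (@obj_edges R n e w _ _ (@basic_unique R n e b _ _ ff fxb bf pf)) //.
Qed.

Lemma sum_bool_card (R : realFieldType) n (P Q : pred 'I_n) :
  \sum_(j < n | P j) ((Q j)%:R : R) = (#|[set j | P j && Q j]|)%:R.
Proof.
rewrite -natr_sum; congr (_%:R).
rewrite (eq_bigr (fun j => if Q j then 1%N else 0%N)); last by move=> j _; case: (Q j).
by rewrite -big_mkcondr sum1dep_card cardsE.
Qed.

Lemma ind_feasible (R : realFieldType) n (e : rel 'I_n) (b : 'I_n -> nat) (M : rel 'I_n) :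
  perfect_bmatching e b M -> primal_feasible e b (fun i j => ((M i j)%:R : R)).
Proof.
move=> [Ms [Me Md]]; split; [|split].
- by move=> i j; rewrite Ms.
- by move=> i j _; case: (M i j); rewrite ?ler01 ?lexx.
- move=> i; rewrite sum_bool_card -Md; congr (_%:R); apply: eq_card => j.
  rewrite !inE; apply/andP/idP => [[]//|h]; split => //; exact: Me.
Qed.

Lemma ind_obj (R : realFieldType) n (e : rel 'I_n) (w : 'I_n -> 'I_n -> R) (M : rel 'I_n) :
  primal_obj e w (fun i j => ((M i j)%:R : R)) = matching_weight e w M.
Proof.
apply: eq_bigr => i _; apply: eq_bigr => j _; by case: (M i j); rewrite ?mulr1 ?mulr0.
Qed.

Lemma Mstar_opt (R : realFieldType) n (e : rel 'I_n) (b : 'I_n -> nat)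
  (w : 'I_n -> 'I_n -> R) (Mstar : rel 'I_n) :
  simple_graph e -> (exists M, perfect_bmatching e b M) ->
  no_fractional_solution e b w -> min_perfect_bmatching e b w Mstar ->
  primal_optimal e b w (fun i j => ((Mstar i j)%:R : R)).
Proof.
move=> [_ esym] [M0 pM0] nf [pM mM].
have [x [fx xopt]] := @lp_opt_exists R n e b w (ex_intro _ _ (@ind_feasible R n e b M0 pM0)).
have xi := nf x (conj fx xopt).
move: (fx) => [xs [xb xsum]].
pose M' := fun i j => e i j && (x i j == 1).
have pM' : perfect_bmatching e b M'.
  split; [|split].
  - by move=> i j; rewrite /M' esym xs.
  - by move=> i j /andP[].
  - move=> i; apply/eqP; rewrite -(eqr_nat R) -xsum.
    rewrite (eq_bigr (fun j => ((x i j == 1)%:R : R))); last first.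
      by move=> j eij; case: (xi i j eij) => ->; [rewrite eq_sym oner_eq0 | rewrite eqxx].
    by rewrite sum_bool_card.
have wM' : matching_weight e w M' = primal_obj e w x.
  apply: eq_bigr => i _; apply: eq_bigr => j /andP[eij _].
  rewrite /M' eij /=; case: (xi i j eij) => ->; [by rewrite eq_sym oner_eq0 mulr0 | by rewrite eqxx mulr1].
split; first exact: (@ind_feasible R n e b Mstar pM).
move=> x'' fx''; rewrite ind_obj.
apply: le_trans (mM _ pM') _; rewrite wM'; exact: xopt.
Qed.

Definition ind {R : realFieldType} {n} (u v i j : 'I_n) : R :=
  if (u == i) && (v == j) then 1 else 0.

Lemma row_ind (R : realFieldType) n (e : rel 'I_n) (u v i : 'I_n) :
  e u v -> \sum_(j < n | e i j) (ind u v i j : R) = if u == i then 1 else 0.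
Proof.
move=> euv; rewrite /ind; case: eqP => [<-|_] /=; last by rewrite big1.
rewrite (bigD1 v) //= eqxx big1 ?addr0 // => j /andP[_ jv].
by rewrite eq_sym (negbTE jv).
Qed.

Lemma es_ind (R : realFieldType) n (e : rel 'I_n) (w : 'I_n -> 'I_n -> R) (u v : 'I_n) :
  edge_sum e (fun i j => w i j * ind u v i j) = if e u v && (u < v)%N then w u v else 0.
Proof.
rewrite /edge_sum (bigD1 u) //= [X in _ + X]big1 ?addr0; last first.
  move=> i ui; apply: big1 => j _; by rewrite /ind eq_sym (negbTE ui) /= mulr0.
rewrite /ind eqxx /=; case: ifP => h.
  rewrite (bigD1 v) //= eqxx mulr1 big1 ?addr0 // => j /andP[_ jv].
  by rewrite eq_sym (negbTE jv) mulr0.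
apply: big1 => j hj; case: eqP => [vj|]; last by rewrite mulr0.
by subst; rewrite hj in h.
Qed.

Lemma es_chi (R : realFieldType) n (e : rel 'I_n) (w : 'I_n -> 'I_n -> R) (u v : 'I_n) :
  (forall i j, e i j = e j i) -> sym_fun w -> e u v -> u != v ->
  edge_sum e (fun i j => w i j * (ind u v i j + ind v u i j)) = w u v.
Proof.
move=> esym ws euv uv.
have -> : edge_sum e (fun i j => w i j * (ind u v i j + ind v u i j)) =
  edge_sum e (fun i j => w i j * ind u v i j) + 1 * edge_sum e (fun i j => w i j * ind v u i j).
  rewrite -edge_sum_lin; apply: eq_bigr => i _; apply: eq_bigr => j _; by rewrite mul1r mulrDr.
rewrite mul1r !es_ind (esym v u) euv (ws v u) /=.
have : (val u != val v) by [].
case: ltngtP => //= _ _; by rewrite ?addr0 ?add0r.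
Qed.

Lemma tel (R : realFieldType) (r s : nat) (f : nat -> R) : (r <= s)%N ->
  \sum_(r <= k < s) (f k - f k.+1) = f r - f s.
Proof.
move=> rs; rewrite -(opprB (f s)) -(telescope_sumr _ rs) -sumrN.
by apply: eq_bigr => k _; rewrite opprB.
Qed.

Lemma cycle_contra (R : realFieldType) n (e : rel 'I_n) (b : 'I_n -> nat)
  (w : 'I_n -> 'I_n -> R) (M : rel 'I_n) (y : 'I_n -> R) (p : nat -> 'I_n) (c : bool)
  (r s : nat) :
  (forall i j, e i j = e j i) -> sym_fun w -> (forall i j, M i j = M j i) ->
  no_fractional_solution e b w ->
  primal_optimal e b w (fun i j => ((M i j)%:R : R)) ->
  (forall k, (k < s)%N -> e (p k) (p k.+1)) ->
  (forall k, (k < s)%N -> M (p k) (p k.+1) = odd k (+) c) ->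
  (forall k, (k < s)%N -> p k != p k.+1) ->
  (forall k, (k < s)%N -> w (p k) (p k.+1) = y (p k) + y (p k.+1)) ->
  (r < s)%N -> p r = p s -> odd r = odd s -> False.
Proof.
move=> esym ws Ms nf [[fMs [fMb fMsum]] Mopt] he hM hne ht rs prs ors.
pose sg := fun k : nat => (if odd k (+) c then -1 else 1 : R).
have sgS : forall k, sg k.+1 = - sg k.
  by move=> k; rewrite /sg /=; case: (odd k); case: (c); rewrite /= ?opprK.
have sgrs : sg r = sg s by rewrite /sg ors.
pose chi := fun k i j => (ind (p k) (p k.+1) i j + ind (p k.+1) (p k) i j : R).
pose D := fun i j => \sum_(r <= k < s) sg k * chi k i j.
pose N := fun i j => \sum_(r <= k < s) chi k i j.
pose S : R := (s - r)%:R.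
pose eps : R := (2 * S)^-1.
have Spos : 0 < S by rewrite ltr0n subn_gt0.
have epsS : eps * S = 2^-1.
  by rewrite /eps invfM -mulrA mulVf ?mulr1 // gt_eqF.
have two : 0 < (2 : R)^-1 by rewrite invr_gt0 ltr0n.
have epos : 0 < eps by nra.
have chi01 : forall k i j, (k < s)%N -> 0 <= chi k i j <= 1.
  move=> k i j ks; rewrite /chi /ind.
  case h1: ((p k == i) && (p k.+1 == j)); case h2: ((p k.+1 == i) && (p k == j)); rewrite /= ?addr0 ?add0r ?lexx ?ler01 //.
  move: h1 h2 => /andP[/eqP a _] /andP[/eqP b' _].
  by move: (hne k ks); rewrite a b' eqxx.
have chisym : forall k i j, chi k j i = chi k i j.
  move=> k i j; rewrite /chi /ind [(p k == j) && _]andbC [(p k.+1 == j) && _]andbC addrC //.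
have D_eq : forall i j, D i j = (if M i j then -1 else 1) * N i j.
  move=> i j; rewrite /D /N mulr_sumr; apply: eq_big_nat => k /andP[_ ks].
  rewrite /chi /ind; case h1: ((p k == i) && (p k.+1 == j)).
    by move/andP: h1 => [/eqP <- /eqP <-]; rewrite (hM k ks).
  case h2: ((p k.+1 == i) && (p k == j)).
    by move/andP: h2 => [/eqP <- /eqP <-]; rewrite Ms (hM k ks).
  by rewrite addr0 !mulr0.
have N0 : forall i j, 0 <= N i j.
  move=> i j; have := @ler_sum_nat R r s (fun=> 0) (fun k => chi k i j).
  rewrite sumr_const_nat mul0rn; apply => k /andP[_ ks]; by case/andP: (chi01 k i j ks).
have NS : forall i j, N i j <= S.
  move=> i j; rewrite /S -sumr_const_nat; apply: ler_sum_nat => k /andP[_ ks].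
  by case/andP: (chi01 k i j ks).
have N1 : 1 <= N (p r) (p r.+1).
  rewrite /N big_ltn //.
  have h1 : 1 <= chi r (p r) (p r.+1).
    rewrite /chi {1}/ind !eqxx /= lerDl /ind; case: ifP => _; by rewrite ?ler01 ?lexx.
  have h2 : 0 <= \sum_(r.+1 <= k < s) chi k (p r) (p r.+1).
    have := @ler_sum_nat R r.+1 s (fun=> 0) (fun k => chi k (p r) (p r.+1)).
    rewrite sumr_const_nat mul0rn; apply => k /andP[_ ks]; by case/andP: (chi01 k (p r) (p r.+1) ks).
  lra.
have Dsum : forall i, \sum_(j < n | e i j) D i j = 0.
  move=> i; rewrite /D exchange_big /=.
  pose a := fun k => sg k * (if p k == i then 1 else 0).
  rewrite (@eq_big_nat _ _ _ r s _ (fun k => a k - a k.+1)); last first.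
    move=> k /andP[_ ks]; rewrite -mulr_sumr /chi big_split /=.
    rewrite (@row_ind R n e (p k) (p k.+1) i (he k ks)) (@row_ind R n e (p k.+1) (p k) i); last by rewrite esym he.
    by rewrite /a sgS mulNr opprK mulrDr.
  by rewrite tel ?(ltnW rs) // /a sgrs prs subrr.
have ED : edge_sum e (fun i j => w i j * D i j) = 0.
  have -> : edge_sum e (fun i j => w i j * D i j) =
      \sum_(r <= k < s) sg k * edge_sum e (fun i j => w i j * chi k i j).
    rewrite /edge_sum /D.
    under eq_bigr => i _ do under eq_bigr => j _ do rewrite mulr_sumr.
    under eq_bigr => i _ do rewrite exchange_big.
    rewrite exchange_big; apply: eq_bigr => k _; rewrite mulr_sumr; apply: eq_bigr => i _.
    rewrite mulr_sumr; apply: eq_bigr => j _; by rewrite mulrCA.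
  pose a := fun k => sg k * y (p k).
  rewrite (@eq_big_nat _ _ _ r s _ (fun k => a k - a k.+1)); last first.
    move=> k /andP[_ ks]; rewrite /chi (@es_chi R n e w _ _ esym ws (he k ks) (hne k ks)) (ht k ks).
    by rewrite /a sgS mulNr opprK mulrDr.
  by rewrite tel ?(ltnW rs) // /a sgrs prs subrr.
pose x' := fun i j => ((M i j)%:R : R) + eps * D i j.
have fx' : primal_feasible e b x'.
  split; [|split].
  - move=> i j; rewrite /x' (Ms i j); congr (_ + eps * _).
    by apply: eq_bigr => k _; rewrite chisym.
  - move=> i j eij; rewrite /x' D_eq; have := N0 i j; have := NS i j.
    case: (M i j) => /= h1 h2; rewrite ?mulr1n ?mulr0n; apply/andP; split; nra.
  - move=> i; rewrite /x' big_split /= fMsum -mulr_sumr Dsum mulr0 addr0 //.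
have opt' : primal_optimal e b w x'.
  split => // x'' f''; rewrite /x' obj_lin ED mulr0 addr0; exact: Mopt.
have := nf x' opt' (p r) (p r.+1) (he r rs); rewrite /x' D_eq.
have := NS (p r) (p r.+1); move: N1; move: (N (p r) (p r.+1)) => m m1 mS.
have em : eps * m <= 2^-1 by rewrite -epsS ler_pM2l.
have em1 : eps <= eps * m by rewrite ler_peMr // ltW.
case: (M (p r) (p r.+1)); rewrite /= ?mulr1n ?mulr0n; case=> h';
  move: (eps) em em1 h' epos two => q em em1 h' epos two; clear -em em1 h' epos two; lra.
Qed.

Theorem lemma2 (R : realFieldType) (n : nat) (e : rel 'I_n)
  (w : 'I_n -> 'I_n -> R) (b : 'I_n -> nat) (Mstar : rel 'I_n)
  (ystar : 'I_n -> R) (lamstar : 'I_n -> 'I_n -> R) :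
  simple_graph e ->
  sym_fun w ->
  (forall i, (0 < b i)%N /\ (b i <= #|[set j | e i j]|)%N) ->
  (exists M, perfect_bmatching e b M) ->
  no_fractional_solution e b w ->
  min_perfect_bmatching e b w Mstar ->
  dual_optimal e b w ystar lamstar ->
  forall (p : nat -> 'I_n) (L : nat),
    alternating_path e Mstar p L ->
    (2 * n <= L)%N ->
    exists r, (r < L)%N /\
      0 < `| w (p r) (p r.+1) - ystar (p r) - ystar (p r.+1) |.
Proof.
move=> [eirr esym] ws hb hM nf [pMs mMs] dopt p L [he [[c hc] [hne hne2]]] hL.
apply: NNPP => H.
have ht : forall k, (k < L)%N -> w (p k) (p k.+1) = ystar (p k) + ystar (p k.+1).
  move=> k kL.
  have h0 : ~ (0 < `|w (p k) (p k.+1) - ystar (p k) - ystar (p k.+1)|).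
    by move=> h; apply: H; exists k.
  move/negP: h0; rewrite -leNgt normr_le0 => /eqP h0.
  by apply/eqP; rewrite -subr_eq0 opprD addrA h0.
have Mopt := @Mstar_opt R n e b w Mstar (conj eirr esym) hM nf (conj pMs mMs).
pose f := fun k : 'I_(2 * n).+1 => (p k, odd k).
have : ~~ injectiveb f.
  apply/negP => /injectiveP inj; have := leq_card f inj.
  rewrite card_prod card_bool !card_ord; lia.
move/injectiveP => ninj.
have [k1 [k2 [fk kne]]] : exists k1 k2, f k1 = f k2 /\ k1 != k2.
  apply: NNPP => H2; apply: ninj => k1 k2 fk; apply: NNPP => kne; apply: H2.
  exists k1, k2; split => //; exact/eqP.
rewrite /f in fk; case: fk => pk ok.
wlog lt : k1 k2 pk ok kne / (k1 < k2)%N.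
  move=> hw; case: (ltngtP k1 k2) => h; first exact: (hw k1 k2 pk ok kne h).
    by apply: (hw k2 k1) => //; rewrite eq_sym.
  by move/val_inj: h kne => ->; rewrite eqxx.
have kL : forall k, (k < k2)%N -> (k < L)%N.
  move=> k kk; apply: leq_trans kk _; apply: leq_trans hL; rewrite -ltnS; exact: ltn_ord.
apply: (@cycle_contra R n e b w Mstar ystar p c k1 k2) => //.
- by case: pMs.
- by move=> k kk; apply: he; apply: kL.
- by move=> k kk; apply: hc; apply: kL.
- by move=> k kk; apply: hne; apply: kL.
- by move=> k kk; apply: ht; apply: kL.
Qed.
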